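(* Fix a horizon $T\ge 1$, $N\ge 1$ net-capacity-surplus profiles $(P_t(k))_{t=1}^T$, $k=1,\dots,N$, and an initial state of charge $S_0\ge 0$. For parameters $\overline{S}\ge S_0$ (energy capacity) and $\overline{x}\ge 0$ (power capacity), let $v_k(\overline{S},\overline{x})$ be the optimal value of problem (P1) for profile $k$, and $$\mathrm{EUE}(\overline{S},\overline{x})=\frac1N\sum_{k=1}^N\Big(\sum_{t=1}^T p_t^-(k)+v_k(\overline{S},\overline{x})\Big).$$ Then (P1) is feasible for every such parameter pair. Moreover, if the qualified capacity is taken to be $\overline{S}$, or $\overline{x}$, or more generally if the parameters move along a ray $(\overline{S},\overline{x})=(\overline{S}^0+a\theta,\ \overline{x}^0+b\theta)$, $\theta\ge 0$, with fixed $a,b\ge 0$, $(a,b)\neq(0,0)$, then $\mathrm{EUE}$, viewed as a function of this single parameter, has the following properties: (i) it is continuous and piecewise linear (with finitely many pieces); (ii) it is non-increasing, so the marginal reliability impact $\mathrm{MRI}=-\partial\,\mathrm{EUE}/\partial\,\mathrm{QC}$ is non-negative wherever it exists, and both one-sided derivatives of $\mathrm{EUE}$ are $\le 0$ everywhere. This holds regardless of the profiles $P_t(k)$.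
   Context: For a real number $P_t$ (the net capacity surplus at hour $t$: total available non-storage capacity minus demand), define the net power surplus $p_t^+=\max\{P_t,0\}$ and deficiency $p_t^-=\max\{-P_t,0\}$; thus $p_t^\pm\ge 0$ and $p_t^+p_t^-=0$. For one profile, problem (P1) (single storage under reliability dispatch) is $$\min_{S_1,\dots,S_T}\ \sum_{t=1}^T\min\{0,\,S_t-S_{t-1}\}$$ subject to, for all $t=1,\dots,T$ (with $S_0$ the given constant): $0\le S_t\le \overline{S}$ (multipliers $\lambda_{1t},\lambda_{2t}\ge0$), $-\overline{x}\le S_t-S_{t-1}\le \overline{x}$ (multipliers $\lambda_{3t}$ for the lower, $\lambda_{4t}$ for the upper bound), $-p_t^-\le S_t-S_{t-1}\le p_t^+$ (multipliers $\lambda_{5t},\lambda_{6t}$). Here $S_t$ is the state of charge at the end of hour $t$. The unserved energy of the profile is $\sum_t p_t^-+$ (optimal value), and EUE is the average over the $N$ equally likely profiles. *)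

(* Defs.v *)
From Stdlib Require Import Reals.
From Coquelicot Require Import Coquelicot.
Open Scope R_scope.

Fixpoint sum1 (n : nat) (f : nat -> R) : R :=
  match n with O => 0 | Datatypes.S m => sum1 m f + f (Datatypes.S m) end.

Fixpoint sum0 (n : nat) (f : nat -> R) : R :=
  match n with O => 0 | Datatypes.S m => sum0 m f + f m end.

Definition pplus (p : R) : R := Rmax p 0.
Definition pminus (p : R) : R := Rmax (- p) 0.

(* Feasibility of a state-of-charge trajectory SoC (SoC 0 = S0, SoC t = end of
   hour t) for problem (P1) with profile P (P t = net capacity surplus at hour t). *)
Definition P1_feasible (T : nat) (P : nat -> R) (S0 Sbar xbar : R)
  (SoC : nat -> R) : Prop :=
  SoC O = S0 /\
  forall t : nat, (1 <= t <= T)%nat ->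
    0 <= SoC t <= Sbar /\
    - xbar <= SoC t - SoC (pred t) <= xbar /\
    - pminus (P t) <= SoC t - SoC (pred t) <= pplus (P t).

Definition P1_obj (T : nat) (SoC : nat -> R) : R :=
  sum1 T (fun t => Rmin 0 (SoC t - SoC (pred t))).

Definition P1_value (T : nat) (P : nat -> R) (S0 Sbar xbar : R) : R :=
  real (Glb_Rbar (fun v => exists SoC,
          P1_feasible T P S0 Sbar xbar SoC /\ v = P1_obj T SoC)).

(* EUE over N equally likely profiles Ps k (k = 0..N-1). *)
Definition EUE (T N : nat) (Ps : nat -> nat -> R) (S0 Sbar xbar : R) : R :=
  / INR N * sum0 N (fun k =>
     sum1 T (fun t => pminus (Ps k t)) + P1_value T (Ps k) S0 Sbar xbar).

Definition piecewise_linear_nonneg (f : R -> R) : Prop :=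
  exists (n : nat) (br sl ic : nat -> R),
    br O = 0 /\
    (forall i, (i < n)%nat -> br i < br (Datatypes.S i)) /\
    (forall i th, (i < n)%nat -> br i <= th <= br (Datatypes.S i) ->
                  f th = sl i * th + ic i) /\
    (forall th, br n <= th -> f th = sl n * th + ic n).

Definition continuous_nonneg (f : R -> R) : Prop :=
  forall th, 0 <= th ->
    filterlim f (within (fun x => 0 <= x) (locally th)) (locally (f th)).

(* Main.v *)
Require Import Defs.
From Stdlib Require Import Reals.
From Coquelicot Require Import Coquelicot.
From Stdlib Require Import Lra Lia Classical Arith.
Open Scope R_scope.

Ltac dest_minmax :=
  unfold pplus, pminus in *; unfold Rmin, Rmax in *;
  repeat match goal with
  | |- context [Rle_dec ?a ?b] => destruct (Rle_dec a b)
  | H : context [Rle_dec ?a ?b] |- _ => destruct (Rle_dec a b)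
  end.

Fixpoint Gr (P : nat -> R) (S0 Sb xb : R) (t : nat) : R :=
  match t with
  | O => S0
  | Datatypes.S m =>
      if Rle_dec (P (Datatypes.S m)) 0
      then Rmax (Gr P S0 Sb xb m - Rmin xb (- P (Datatypes.S m))) 0
      else Rmin (Gr P S0 Sb xb m + Rmin xb (P (Datatypes.S m))) Sb
  end.

Definition Q (t : nat) (SoC : nat -> R) : R :=
  sum1 t (fun u => Rmin 0 (SoC u - SoC (pred u))).

Lemma Gr_bounds P S0 Sb xb : 0 <= S0 <= Sb -> 0 <= xb ->
  forall t, 0 <= Gr P S0 Sb xb t <= Sb.
Proof.
  intros H1 H2 t; induction t as [|t IH]; simpl; [lra|].
  destruct (Rle_dec (P (Datatypes.S t)) 0); dest_minmax; lra.
Qed.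

Lemma Gr_feas T P S0 Sb xb : 0 <= S0 <= Sb -> 0 <= xb ->
  P1_feasible T P S0 Sb xb (Gr P S0 Sb xb).
Proof.
  intros H1 H2; split; [reflexivity|].
  intros t Ht. destruct t as [|t]; [lia|].
  pose proof (Gr_bounds P S0 Sb xb H1 H2 t) as B.
  pose proof (Gr_bounds P S0 Sb xb H1 H2 (Datatypes.S t)) as B'.
  simpl pred. simpl Gr in *.
  destruct (Rle_dec (P (Datatypes.S t)) 0); dest_minmax; lra.
Qed.

Lemma feas_mono T P S0 Sb1 xb1 Sb2 xb2 SoC : Sb1 <= Sb2 -> xb1 <= xb2 ->
  P1_feasible T P S0 Sb1 xb1 SoC -> P1_feasible T P S0 Sb2 xb2 SoC.
Proof.
  intros h1 h2 [H0 H]; split; auto. intros t Ht; specialize (H t Ht); lra.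
Qed.

Lemma Q_inv T P S0 Sb xb SoC : 0 <= S0 <= Sb -> 0 <= xb ->
  P1_feasible T P S0 Sb xb SoC -> forall t, (t <= T)%nat ->
  Q t (Gr P S0 Sb xb) <= Q t SoC /\
  Q t (Gr P S0 Sb xb) - Gr P S0 Sb xb t <= Q t SoC - SoC t.
Proof.
  intros H1 H2 [F0 F] t; induction t as [|t IH]; intros Ht.
  - unfold Q; simpl; rewrite F0; lra.
  - destruct IH as [I1 I2]; [lia|].
    destruct (F (Datatypes.S t)) as [A [B C]]; [lia|].
    pose proof (Gr_bounds P S0 Sb xb H1 H2 t) as B0.
    unfold Q in *; simpl sum1; simpl pred in *.
    set (qg := sum1 t _) in *. set (qs := sum1 t _) in *.
    simpl Gr.
    destruct (Rle_dec (P (Datatypes.S t)) 0); dest_minmax; lra.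
Qed.

Lemma value_eq T P S0 Sb xb : 0 <= S0 <= Sb -> 0 <= xb ->
  P1_value T P S0 Sb xb = Q T (Gr P S0 Sb xb).
Proof.
  intros H1 H2. unfold P1_value.
  rewrite (is_glb_Rbar_unique _ (Finite (Q T (Gr P S0 Sb xb)))); [reflexivity|].
  split.
  - intros v [SoC [HF ->]]. simpl.
    destruct (Q_inv T P S0 Sb xb SoC H1 H2 HF T (le_n _)) as [A _]. exact A.
  - intros l Hl. apply Hl. exists (Gr P S0 Sb xb). split; [apply Gr_feas; auto|reflexivity].
Qed.

Lemma value_mono T P S0 Sb1 xb1 Sb2 xb2 : 0 <= S0 <= Sb1 -> 0 <= xb1 ->
  Sb1 <= Sb2 -> xb1 <= xb2 ->
  Q T (Gr P S0 Sb2 xb2) <= Q T (Gr P S0 Sb1 xb1).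
Proof.
  intros H1 H2 H3 H4.
  assert (HF := Gr_feas T P S0 Sb1 xb1 H1 H2).
  apply (feas_mono _ _ _ _ _ Sb2 xb2) in HF; auto.
  destruct (Q_inv T P S0 Sb2 xb2 _ ltac:(lra) ltac:(lra) HF T (le_n _)); auto.
Qed.

Definition aff_on (f : R -> R) u v :=
  exists s c, forall x, u <= x <= v -> f x = s * x + c.
Definition LPL (f : R -> R) :=
  (forall th, exists e, 0 < e /\ aff_on f th (th + e) /\ aff_on f (th - e) th) /\
  (exists M s c, forall x, M <= x -> f x = s * x + c).
Definition sgn_const (h : R -> R) u v :=
  (forall x, u <= x <= v -> 0 <= h x) \/ (forall x, u <= x <= v -> h x <= 0).

Lemma aff_sub f u v u' v' : aff_on f u v -> u <= u' -> v' <= v -> aff_on f u' v'.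
Proof. intros [s [c H]] h1 h2; exists s, c; intros x Hx; apply H; lra. Qed.

Lemma aff_op f g u v (op : R -> R -> R) :
  (forall s1 c1 s2 c2, exists s c, forall x, op (s1*x+c1) (s2*x+c2) = s*x+c) ->
  aff_on f u v -> aff_on g u v -> aff_on (fun x => op (f x) (g x)) u v.
Proof.
  intros Hop [s1 [c1 H1]] [s2 [c2 H2]].
  destruct (Hop s1 c1 s2 c2) as [s [c Hc]]. exists s, c.
  intros x Hx; rewrite H1, H2 by auto; apply Hc.
Qed.

Lemma LPL_op f g (op : R -> R -> R) :
  (forall s1 c1 s2 c2, exists s c, forall x, op (s1*x+c1) (s2*x+c2) = s*x+c) ->
  LPL f -> LPL g -> LPL (fun x => op (f x) (g x)).
Proof.
  intros Hop [Lf [Mf [sf [cf Tf]]]] [Lg [Mg [sg [cg Tg]]]]. split.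
  - intros th. destruct (Lf th) as [e1 [E1 [A1 B1]]]. destruct (Lg th) as [e2 [E2 [A2 B2]]].
    exists (Rmin e1 e2). split; [apply Rmin_pos; auto|].
    pose proof (Rmin_l e1 e2); pose proof (Rmin_r e1 e2).
    split; apply aff_op; auto.
    + apply (aff_sub _ _ _ _ _ A1); lra.
    + apply (aff_sub _ _ _ _ _ A2); lra.
    + apply (aff_sub _ _ _ _ _ B1); lra.
    + apply (aff_sub _ _ _ _ _ B2); lra.
  - destruct (Hop sf cf sg cg) as [s [c Hc]]. exists (Rmax Mf Mg), s, c.
    intros x Hx. pose proof (Rmax_l Mf Mg); pose proof (Rmax_r Mf Mg).
    rewrite Tf, Tg by lra. apply Hc.
Qed.

Lemma LPL_plus f g : LPL f -> LPL g -> LPL (fun x => f x + g x).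
Proof. apply (LPL_op f g Rplus). intros; exists (s1+s2), (c1+c2); intros; ring. Qed.

Lemma LPL_minus f g : LPL f -> LPL g -> LPL (fun x => f x - g x).
Proof. apply (LPL_op f g Rminus). intros; exists (s1-s2), (c1-c2); intros; ring. Qed.

Lemma LPL_lin p q : LPL (fun x => p + q * x).
Proof.
  split.
  - intros th; exists 1; split; [lra|]; split; exists q, p; intros; ring.
  - exists 0, q, p; intros; ring.
Qed.

Lemma LPL_const p : LPL (fun _ => p).
Proof.
  split.
  - intros th; exists 1; split; [lra|]; split; exists 0, p; intros; ring.
  - exists 0, 0, p; intros; ring.
Qed.

Lemma LPL_ext f g : (forall x, f x = g x) -> LPL f -> LPL g.
Proof.
  intros E [L [M [s [c Tl]]]]; split.
  - intros th; destruct (L th) as [e [He [[s1 [c1 A]] [s2 [c2 B]]]]].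
    exists e; split; auto; split; [exists s1, c1|exists s2, c2]; intros; rewrite <- E; auto.
  - exists M, s, c; intros; rewrite <- E; auto.
Qed.

Lemma LPL_scal c f : LPL f -> LPL (fun x => c * f x).
Proof.
  intros [L [M [s [d Tl]]]]; split.
  - intros th; destruct (L th) as [e [He [[s1 [c1 A]] [s2 [c2 B]]]]].
    exists e; split; auto; split; [exists (c*s1), (c*c1)|exists (c*s2), (c*c2)];
      intros x Hx; [rewrite A by auto|rewrite B by auto]; ring.
  - exists M, (c*s), (c*d); intros; rewrite Tl by auto; ring.
Qed.

Lemma between s c u v x : u <= x <= v -> 0 <= s*u+c -> 0 <= s*v+c -> 0 <= s*x+c.
Proof.
  intros Hx H1 H2. destruct (Rle_dec 0 s).
  - assert (s*u <= s*x) by (apply Rmult_le_compat_l; lra). lra.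
  - assert (s*v <= s*x) by (apply Rmult_le_compat_neg_l; lra). lra.
Qed.

Lemma between' s c u v x : u <= x <= v -> s*u+c <= 0 -> s*v+c <= 0 -> s*x+c <= 0.
Proof.
  intros Hx H1 H2. pose proof (between (-s) (-c) u v x Hx). lra.
Qed.

Lemma sign_split h u v : aff_on h u v -> u < v ->
  sgn_const h u v \/ exists r, u < r < v /\ sgn_const h u r /\ sgn_const h r v.
Proof.
  intros [s [c H]] Huv.
  assert (Hu := H u ltac:(lra)); assert (Hv := H v ltac:(lra)).
  destruct (Rle_dec 0 (h u)), (Rle_dec 0 (h v)).
  - left; left; intros x Hx; rewrite H by lra; apply (between s c u v); lra.
  - destruct (Req_dec (h u) 0).
    { left; right; intros x Hx; rewrite H by lra; apply (between' s c u v); lra. }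
    right. assert (Hs : s < 0) by nra.
    exists (- c / s).
    assert (Hr : s * (- c / s) + c = 0) by (field; lra).
    assert (u < - c / s < v).
    { split; apply (Rmult_lt_reg_l (-s)); try lra;
      replace (-s * (-c/s)) with c by (field; lra); lra. }
    split; auto; split.
    + left; intros x Hx; rewrite H by lra; apply (between s c u (-c/s)); lra.
    + right; intros x Hx; rewrite H by lra; apply (between' s c (-c/s) v); lra.
  - destruct (Req_dec (h v) 0).
    { left; right; intros x Hx; rewrite H by lra; apply (between' s c u v); lra. }
    right. assert (Hs : s > 0) by nra.
    exists (- c / s).
    assert (Hr : s * (- c / s) + c = 0) by (field; lra).
    assert (u < - c / s < v).
    { split; apply (Rmult_lt_reg_l s); try lra;
      replace (s * (-c/s)) with (-c) by (field; lra); lra. }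
    split; auto; split.
    + right; intros x Hx; rewrite H by lra; apply (between' s c u (-c/s)); lra.
    + left; intros x Hx; rewrite H by lra; apply (between s c (-c/s) v); lra.
  - left; right; intros x Hx; rewrite H by lra; apply (between' s c u v); lra.
Qed.

Lemma sgn_sub h u v u' v' : sgn_const h u v -> u <= u' -> v' <= v -> sgn_const h u' v'.
Proof. intros [H|H] h1 h2; [left|right]; intros; apply H; lra. Qed.

Lemma aff_min f g u v : aff_on f u v -> aff_on g u v ->
  sgn_const (fun x => f x - g x) u v -> aff_on (fun x => Rmin (f x) (g x)) u v.
Proof.
  intros [s1 [c1 A]] [s2 [c2 B]] [S|S].
  - exists s2, c2; intros x Hx; specialize (S x Hx); simpl in S.
    rewrite Rmin_right by lra; auto.
  - exists s1, c1; intros x Hx; specialize (S x Hx); simpl in S.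
    rewrite Rmin_left by lra; auto.
Qed.

Lemma aff_minus f g u v : aff_on f u v -> aff_on g u v -> aff_on (fun x => f x - g x) u v.
Proof. intros; apply (aff_op f g u v Rminus); auto. intros; exists (s1-s2), (c1-c2); intros; ring. Qed.

Lemma LPL_min f g : LPL f -> LPL g -> LPL (fun x => Rmin (f x) (g x)).
Proof.
  intros [Lf [Mf [sf [cf Tf]]]] [Lg [Mg [sg [cg Tg]]]]. split.
  - intros th. destruct (Lf th) as [e1 [E1 [A1 B1]]]. destruct (Lg th) as [e2 [E2 [A2 B2]]].
    assert (0 < Rmin e1 e2) by (apply Rmin_pos; auto).
    pose proof (Rmin_l e1 e2); pose proof (Rmin_r e1 e2).
    set (e := Rmin e1 e2) in *.
    assert (Af : aff_on f th (th+e)) by (apply (aff_sub _ _ _ _ _ A1); lra).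
    assert (Ag : aff_on g th (th+e)) by (apply (aff_sub _ _ _ _ _ A2); lra).
    assert (Bf : aff_on f (th-e) th) by (apply (aff_sub _ _ _ _ _ B1); lra).
    assert (Bg : aff_on g (th-e) th) by (apply (aff_sub _ _ _ _ _ B2); lra).
    assert (R1 : exists w, th < w <= th + e /\ sgn_const (fun x => f x - g x) th w).
    { destruct (sign_split _ th (th+e) (aff_minus _ _ _ _ Af Ag)) as [S|[r [Hr [S _]]]];
        [lra| exists (th+e); split; [lra|auto] | exists r; split; [lra|auto]]. }
    assert (R2 : exists w, th - e <= w < th /\ sgn_const (fun x => f x - g x) w th).
    { destruct (sign_split _ (th-e) th (aff_minus _ _ _ _ Bf Bg)) as [S|[r [Hr [_ S]]]];
        [lra| exists (th-e); split; [lra|auto] | exists r; split; [lra|auto]]. }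
    destruct R1 as [w1 [W1 S1]]; destruct R2 as [w2 [W2 S2]].
    exists (Rmin (w1 - th) (th - w2)).
    pose proof (Rmin_l (w1 - th) (th - w2)); pose proof (Rmin_r (w1 - th) (th - w2)).
    split; [apply Rmin_pos; lra|]. split.
    + apply (aff_sub _ th w1); [|lra|lra]. apply aff_min; auto.
      * apply (aff_sub _ _ _ _ _ Af); lra.
      * apply (aff_sub _ _ _ _ _ Ag); lra.
    + apply (aff_sub _ w2 th); [|lra|lra]. apply aff_min; auto.
      * apply (aff_sub _ _ _ _ _ Bf); lra.
      * apply (aff_sub _ _ _ _ _ Bg); lra.
  - pose proof (Rmax_l Mf Mg); pose proof (Rmax_r Mf Mg). set (M := Rmax Mf Mg) in *.
    destruct (Rtotal_order sf sg) as [Hs|[Hs|Hs]].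
    +
      exists (Rmax M ((cg - cf) / (sf - sg))), sf, cf. intros x Hx.
      pose proof (Rmax_l M ((cg - cf) / (sf - sg))); pose proof (Rmax_r M ((cg - cf) / (sf - sg))).
      rewrite Tf, Tg by lra. rewrite Rmin_left; auto.
      assert ((sf - sg) * ((cg - cf) / (sf - sg)) = cg - cf) by (field; lra).
      assert ((sf - sg) * x <= (sf - sg) * ((cg - cf) / (sf - sg))).
      { apply Rmult_le_compat_neg_l; lra. }
      nra.
    + subst sg. destruct (Rle_dec cf cg).
      * exists M, sf, cf; intros x Hx; rewrite Tf, Tg by lra; rewrite Rmin_left; lra.
      * exists M, sf, cg; intros x Hx; rewrite Tf, Tg by lra; rewrite Rmin_right; lra.
    + exists (Rmax M ((cg - cf) / (sf - sg))), sg, cg. intros x Hx.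
      pose proof (Rmax_l M ((cg - cf) / (sf - sg))); pose proof (Rmax_r M ((cg - cf) / (sf - sg))).
      rewrite Tf, Tg by lra. rewrite Rmin_right; auto.
      assert ((sf - sg) * ((cg - cf) / (sf - sg)) = cg - cf) by (field; lra).
      assert ((sf - sg) * ((cg - cf) / (sf - sg)) <= (sf - sg) * x).
      { apply Rmult_le_compat_l; lra. }
      nra.
Qed.

Lemma LPL_max f g : LPL f -> LPL g -> LPL (fun x => Rmax (f x) (g x)).
Proof.
  intros Hf Hg.
  apply (LPL_ext (fun x => -1 * Rmin (-1 * f x) (-1 * g x))).
  - intros x; unfold Rmin, Rmax; destruct (Rle_dec _ _), (Rle_dec _ _); lra.
  - apply LPL_scal. apply (LPL_min (fun x => -1 * f x) (fun x => -1 * g x)); apply LPL_scal; auto.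
Qed.

Definition PLto (g : R -> R) (u : R) :=
  exists n (br sl ic : nat -> R),
    br O = 0 /\
    (forall i, (i < n)%nat -> br i < br (Datatypes.S i)) /\
    (forall i th, (i < n)%nat -> br i <= th <= br (Datatypes.S i) ->
                  g th = sl i * th + ic i) /\
    br n = u.

Lemma PLto0 g : PLto g 0.
Proof.
  exists O, (fun _ => 0), (fun _ => 0), (fun _ => 0).
  repeat split; intros; try lia; reflexivity.
Qed.

Lemma PLto_ext g u v : PLto g u -> u < v -> aff_on g u v -> PLto g v.
Proof.
  intros [n [br [sl [ic [H0 [H1 [H2 H3]]]]]]] Huv [s [c Hsc]].
  exists (Datatypes.S n), (fun i => if le_lt_dec i n then br i else v),
    (fun i => if le_lt_dec n i then s else sl i),
    (fun i => if le_lt_dec n i then c else ic i).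
  repeat split.
  - destruct (le_lt_dec 0 n); [auto|lia].
  - intros i Hi. destruct (le_lt_dec i n); [|lia].
    destruct (le_lt_dec (Datatypes.S i) n).
    + apply H1; lia.
    + assert (i = n) by lia; subst; lra.
  - intros i th Hi Hth. destruct (le_lt_dec i n); [|lia].
    destruct (le_lt_dec (Datatypes.S i) n); destruct (le_lt_dec n i).
    + lia.
    + apply H2; auto.
    + assert (i = n) by lia; subst. apply Hsc; lra.
    + lia.
  - destruct (le_lt_dec (Datatypes.S n) n); [lia|reflexivity].
Qed.

Lemma PLto_sup g M : LPL g -> 0 <= M -> PLto g M.
Proof.
  intros [L _] HM.
  set (E := fun u => 0 <= u <= M /\ PLto g u).
  destruct (completeness E) as [m [Hub Hlub]].
  { exists M; intros u [Hu _]; lra. }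
  { exists 0; split; [lra|apply PLto0]. }
  assert (Hm0 : 0 <= m) by (apply Hub; split; [lra|apply PLto0]).
  assert (HmM : m <= M) by (apply Hlub; intros u [Hu _]; lra).
  destruct (L m) as [e [He [A B]]].
  assert (Pm : PLto g m).
  { destruct (classic (exists u, E u /\ m - e < u)) as [[u [[Hu Pu] Hu2]]|Hn].
    - assert (u <= m) by (apply Hub; split; auto).
      destruct (Req_dec u m); [subst; auto|].
      apply (PLto_ext g u m Pu); [lra|]. apply (aff_sub _ _ _ _ _ B); lra.
    - exfalso. assert (m <= m - e); [|lra].
      apply Hlub. intros u Eu. destruct (Rle_dec u (m - e)); auto.
      exfalso; apply Hn; exists u; split; auto; lra. }
  destruct (Rle_lt_dec M m) as [Hle|Hlt].
  - replace M with m by lra; auto.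
  - exfalso. set (v := Rmin (m + e) M).
    assert (m < v) by (unfold v; apply Rmin_glb_lt; lra).
    assert (v <= M) by apply Rmin_r.
    assert (v <= m + e) by apply Rmin_l.
    assert (Ev : E v).
    { split; [lra|]. apply (PLto_ext g m v Pm); auto. apply (aff_sub _ _ _ _ _ A); lra. }
    specialize (Hub v Ev). lra.
Qed.

Lemma PL_final (f g : R -> R) : LPL g -> (forall x, 0 <= x -> f x = g x) ->
  piecewise_linear_nonneg f.
Proof.
  intros HL Hfg. destruct HL as [L [M [s [c Hs]]]] eqn:EL.
  destruct (PLto_sup g (Rmax M 0) HL (Rmax_r M 0)) as [n [br [sl [ic [H0 [H1 [H2 H3]]]]]]].
  assert (Hpos : forall i, (i <= n)%nat -> 0 <= br i).
  { induction i; intros Hi; [lra|]. specialize (IHi ltac:(lia)). specialize (H1 i ltac:(lia)). lra. }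
  exists n, br, (fun i => if le_lt_dec n i then s else sl i),
    (fun i => if le_lt_dec n i then c else ic i).
  repeat split; auto.
  - intros i th Hi Hth. destruct (le_lt_dec n i); [lia|].
    rewrite Hfg by (specialize (Hpos i ltac:(lia)); lra). apply H2; auto.
  - intros th Hth. destruct (le_lt_dec n n); [|lia].
    pose proof (Rmax_l M 0); pose proof (Rmax_r M 0).
    rewrite Hfg by lra. apply Hs; lra.
Qed.

Lemma cont_from f g : LPL g -> (forall x, 0 <= x -> f x = g x) -> continuous_nonneg f.
Proof.
  intros [L _] Hfg th Hth. destruct (L th) as [e [He [[s1 [c1 A]] [s2 [c2 B]]]]].
  apply filterlim_locally. intros eps.
  set (K := Rabs s1 + Rabs s2 + 1).
  assert (HK : 0 < K) by (unfold K; pose proof (Rabs_pos s1); pose proof (Rabs_pos s2); lra).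
  assert (Hd : 0 < Rmin e (eps / K)).
  { apply Rmin_pos; auto. apply Rdiv_lt_0_compat; auto. apply cond_pos. }
  exists (mkposreal _ Hd). intros y Hy Hy0. simpl in Hy. change (Rabs (y - th) < Rmin e (eps / K)) in Hy.
  change (Rabs (f y - f th) < eps).
  pose proof (Rmin_l e (eps / K)); pose proof (Rmin_r e (eps / K)).
  rewrite !Hfg by lra.
  assert (Hy2 : K * Rabs (y - th) < eps).
  { apply (Rlt_le_trans _ (K * (eps / K))). apply Rmult_lt_compat_l; lra.
    right; field; lra. }
  assert (Hyy : Rabs (y - th) < e) by lra.
  pose proof (Rabs_pos (y - th)).
  destruct (Rle_dec th y).
  - rewrite (A y), (A th) by (rewrite Rabs_right in Hyy by lra; lra).
    replace (s1 * y + c1 - (s1 * th + c1)) with (s1 * (y - th)) by ring.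
    rewrite Rabs_mult. assert (Rabs s1 * Rabs (y - th) <= K * Rabs (y - th)).
    { apply Rmult_le_compat_r; auto. unfold K; pose proof (Rabs_pos s2); lra. }
    lra.
  - rewrite (B y), (B th) by (rewrite Rabs_left in Hyy by lra; lra).
    replace (s2 * y + c2 - (s2 * th + c2)) with (s2 * (y - th)) by ring.
    rewrite Rabs_mult. assert (Rabs s2 * Rabs (y - th) <= K * Rabs (y - th)).
    { apply Rmult_le_compat_r; auto. unfold K; pose proof (Rabs_pos s1); lra. }
    lra.
Qed.

Lemma right_der f g : LPL g -> (forall x, 0 <= x -> f x = g x) ->
  (forall th1 th2, 0 <= th1 <= th2 -> f th2 <= f th1) ->
  forall th, 0 <= th -> exists s, s <= 0 /\
    exists e, 0 < e /\ forall h, 0 < h < e -> (f (th + h) - f th) / h = s.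
Proof.
  intros [L _] Hfg Hmon th Hth. destruct (L th) as [e [He [[s1 [c1 A]] _]]].
  exists s1. split; [|exists e; split; auto].
  - pose proof (Hmon th (th + e) ltac:(lra)). rewrite !Hfg in H by lra.
    rewrite (A th), (A (th+e)) in H by lra. nra.
  - intros h Hh. rewrite !Hfg by lra. rewrite (A th), (A (th+h)) by lra. field; lra.
Qed.

Lemma left_der f g : LPL g -> (forall x, 0 <= x -> f x = g x) ->
  (forall th1 th2, 0 <= th1 <= th2 -> f th2 <= f th1) ->
  forall th, 0 < th -> exists s, s <= 0 /\
    exists e, 0 < e /\ forall h, - e < h < 0 -> (f (th + h) - f th) / h = s.
Proof.
  intros [L _] Hfg Hmon th Hth. destruct (L th) as [e0 [He0 [_ [s2 [c2 B]]]]].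
  set (e := Rmin e0 th). assert (0 < e) by (apply Rmin_pos; auto).
  assert (e <= e0) by apply Rmin_l. assert (e <= th) by apply Rmin_r.
  exists s2. split; [|exists e; split; auto].
  - pose proof (Hmon (th - e) th ltac:(lra)). rewrite !Hfg in H2 by lra.
    rewrite (B th), (B (th-e)) in H2 by lra. nra.
  - intros h Hh. rewrite !Hfg by lra. rewrite (B th), (B (th+h)) by lra. field; lra.
Qed.

Lemma lim_of_eventually (q : R -> R) s e (D : R -> Prop) :
  0 < e -> (forall h, Rabs h < e -> D h -> q h = s) ->
  filterlim q (within D (locally 0)) (locally s).
Proof.
  intros He H. apply (filterlim_ext_loc (fun _ => s)).
  - exists (mkposreal e He). intros y Hy Dy. symmetry; apply H; auto.
    change (Rabs (y - 0) < e) in Hy. rewrite Rminus_0_r in Hy; auto.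
  - apply filterlim_const.
Qed.

Lemma Gr_LPL P S0 Sb0 xb0 a b t :
  LPL (fun th => Gr P S0 (Sb0 + a * th) (xb0 + b * th) t).
Proof.
  induction t as [|t IH]; simpl.
  - apply LPL_const.
  - destruct (Rle_dec (P (Datatypes.S t)) 0).
    + apply LPL_max; [|apply LPL_const]. apply LPL_minus; auto.
      apply LPL_min; [apply LPL_lin|apply LPL_const].
    + apply LPL_min; [|apply LPL_lin]. apply LPL_plus; auto.
      apply LPL_min; [apply LPL_lin|apply LPL_const].
Qed.

Lemma LPL_sum1 n (F : nat -> R -> R) : (forall u, LPL (F u)) ->
  LPL (fun th => sum1 n (fun u => F u th)).
Proof.
  intros H; induction n; simpl; [apply LPL_const|]. apply LPL_plus; auto.
Qed.

Lemma LPL_sum0 n (F : nat -> R -> R) : (forall u, LPL (F u)) ->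
  LPL (fun th => sum0 n (fun u => F u th)).
Proof.
  intros H; induction n; simpl; [apply LPL_const|]. apply LPL_plus; auto.
Qed.

Lemma sum0_ext n F G : (forall k, F k = G k) -> sum0 n F = sum0 n G.
Proof. intros H; induction n; simpl; auto; rewrite IHn, H; auto. Qed.

Lemma sum0_le n F G : (forall k, F k <= G k) -> sum0 n F <= sum0 n G.
Proof. intros H; induction n; simpl; [lra|]. specialize (H n); lra. Qed.

Definition gfun T N Ps S0 Sb0 xb0 a b th :=
  / INR N * sum0 N (fun k => sum1 T (fun t => pminus (Ps k t)) +
     Q T (Gr (Ps k) S0 (Sb0 + a * th) (xb0 + b * th))).

Lemma EUE_eq T N Ps S0 Sb xb : 0 <= S0 <= Sb -> 0 <= xb ->
  EUE T N Ps S0 Sb xb = / INR N * sum0 N (fun k => sum1 T (fun t => pminus (Ps k t)) +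
     Q T (Gr (Ps k) S0 Sb xb)).
Proof.
  intros; unfold EUE; f_equal; apply sum0_ext; intros k; rewrite value_eq; auto.
Qed.

Lemma gfun_LPL T N Ps S0 Sb0 xb0 a b : LPL (gfun T N Ps S0 Sb0 xb0 a b).
Proof.
  unfold gfun. apply LPL_scal.
  apply (LPL_sum0 N (fun k th => sum1 T (fun t => pminus (Ps k t)) +
     Q T (Gr (Ps k) S0 (Sb0 + a * th) (xb0 + b * th)))).
  intros k. apply LPL_plus; [apply LPL_const|].
  unfold Q.
  apply (LPL_sum1 T (fun u th => Rmin 0 (Gr (Ps k) S0 (Sb0 + a * th) (xb0 + b * th) u -
     Gr (Ps k) S0 (Sb0 + a * th) (xb0 + b * th) (pred u)))).
  intros u. apply LPL_min; [apply LPL_const|]. apply LPL_minus; apply Gr_LPL.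
Qed.

Theorem theorem1 (T N : nat) (Ps : nat -> nat -> R) (S0 : R) :
  (1 <= T)%nat -> (1 <= N)%nat -> 0 <= S0 ->
  (forall Sbar xbar, S0 <= Sbar -> 0 <= xbar ->
     forall k, (k < N)%nat -> exists SoC, P1_feasible T (Ps k) S0 Sbar xbar SoC) /\
  (forall Sbar0 xbar0 a b, S0 <= Sbar0 -> 0 <= xbar0 -> 0 <= a -> 0 <= b ->
     (a <> 0 \/ b <> 0) ->
     let f := fun th => EUE T N Ps S0 (Sbar0 + a * th) (xbar0 + b * th) in
     continuous_nonneg f /\ piecewise_linear_nonneg f /\
     (forall th1 th2, 0 <= th1 <= th2 -> f th2 <= f th1) /\
     (forall th l, 0 < th -> is_derive f th l -> 0 <= - l) /\
     (forall th, 0 <= th -> exists l, l <= 0 /\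
        filterlim (fun h => (f (th + h) - f th) / h) (at_right 0) (locally l)) /\
     (forall th, 0 < th -> exists l, l <= 0 /\
        filterlim (fun h => (f (th + h) - f th) / h) (at_left 0) (locally l))).
Proof.
  intros HT HN HS0. split.
  - intros Sb xb H1 H2 k _. exists (Gr (Ps k) S0 Sb xb). apply Gr_feas; auto.
  - intros Sb0 xb0 a b H1 H2 Ha Hb _ f.
    set (g := gfun T N Ps S0 Sb0 xb0 a b).
    assert (HL : LPL g) by apply gfun_LPL.
    assert (Hfg : forall x, 0 <= x -> f x = g x).
    { intros x Hx. unfold f, g, gfun. apply EUE_eq; nra. }
    assert (Hmon : forall th1 th2, 0 <= th1 <= th2 -> f th2 <= f th1).
    { intros th1 th2 Hth. rewrite !Hfg by lra. unfold g, gfun.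
      apply Rmult_le_compat_l.
      { left; apply Rinv_0_lt_compat, lt_0_INR; lia. }
      apply sum0_le; intros k. apply Rplus_le_compat_l.
      apply value_mono; nra. }
    split; [apply (cont_from f g); auto|].
    split; [apply (PL_final f g); auto|].
    split; [auto|].
    split; [|split].
    + intros th l Hth Hd. apply is_derive_Reals in Hd.
      destruct (right_der f g HL Hfg Hmon th ltac:(lra)) as [s [Hs [e [He Hq]]]].
      destruct (Rle_dec l 0); [lra|exfalso].
      destruct (Hd l ltac:(lra)) as [d Hdd].
      set (h := Rmin (d / 2) (e / 2)).
      assert (0 < h) by (apply Rmin_pos; pose proof (cond_pos d); lra).
      assert (h <= d / 2) by apply Rmin_l. assert (h <= e / 2) by apply Rmin_r.
      specialize (Hdd h ltac:(lra)). rewrite Rabs_right in Hdd by lra.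
      specialize (Hdd ltac:(pose proof (cond_pos d); lra)).
      rewrite Hq in Hdd by lra.
      assert (Rabs (s - l) >= l); [|lra].
      rewrite Rabs_left by lra. lra.
    + intros th Hth. destruct (right_der f g HL Hfg Hmon th Hth) as [s [Hs [e [He Hq]]]].
      exists s; split; auto. unfold at_right.
      apply (lim_of_eventually _ s e); auto.
      intros h Hh Hp. apply Hq. split; auto. apply Rabs_def2 in Hh; lra.
    + intros th Hth. destruct (left_der f g HL Hfg Hmon th Hth) as [s [Hs [e [He Hq]]]].
      exists s; split; auto. unfold at_left.
      apply (lim_of_eventually _ s e); auto.
      intros h Hh Hp. apply Hq. split; auto. apply Rabs_def2 in Hh; lra.
Qed.
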